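(* (i) $(\mathcal{N},=)\models\forall\mathsf{x}\forall\mathsf{y}[\neg\neg(\mathsf{x}=\mathsf{y})\rightarrow\mathsf{x}=\mathsf{y}]$. (ii) $(\mathcal{N},\sim_V)\models\forall\mathsf{x}\,\neg\forall\mathsf{y}[\neg\neg(\mathsf{x}=\mathsf{y})\rightarrow\mathsf{x}=\mathsf{y}]$, i.e. for every $\gamma\in\mathcal{N}$ it is not the case that $\forall\alpha[\neg\neg(\gamma\sim_V\alpha)\rightarrow\gamma\sim_V\alpha]$.
   Context: Intuitionistic mathematics (constructive reading of logical constants; Markov's Principle not assumed), with Brouwer's Continuity Principle as an axiom (for every $R\subseteq\mathcal{N}\times\omega$, if $\forall\alpha\exists n[\alpha Rn]$ then $\forall\alpha\exists m\exists n\forall\beta[\overline{\alpha}m\sqsubset\beta\rightarrow\beta Rn]$, where $\overline{\alpha}m=\langle\alpha(0),\dots,\alpha(m-1)\rangle$ and $\sqsubset$ is ''initial segment of''). $\mathcal{N}=\omega^\omega$. The Vitali equivalence relation: $\alpha\sim_V\beta$ iff $\exists n\forall m>n[\alpha(m)=\beta(m)]$. In $(\mathcal{N},E)$ the symbol $=$ is interpreted by the relation $E$; satisfaction read intuitionistically. *)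

(* Defs.v *)
From Stdlib Require Import Arith.

Definition baire := nat -> nat.

Definition baire_eq (a b : baire) : Prop := forall n, a n = b n.

Definition vitali (a b : baire) : Prop := exists n, forall m, n < m -> a m = b m.

Definition init_seg (a : baire) (m : nat) (b : baire) : Prop :=
  forall i, i < m -> a i = b i.

Definition BCP : Prop :=
  forall R : baire -> nat -> Prop,
    (forall a, exists n, R a n) ->
    forall a, exists m n, forall b, init_seg a m b -> R b n.

(* (N,E) |= forall x forall y [~~(x = y) -> x = y], satisfaction read intuitionistically *)
Definition stable_eq (E : baire -> baire -> Prop) : Prop :=
  forall x y, ~ ~ E x y -> E x y.

(* Main.v *)
Require Import Defs.
From Stdlib Require Import Arith Lia Bool.

Fixpoint allz (a : baire) (m : nat) : bool :=
  match m with 0 => true | S m' => allz a m' && (a m' =? 0) end.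

Lemma allz_true a m : (forall i, i < m -> a i = 0) -> allz a m = true.
Proof.
  induction m; simpl; intros H; auto.
  rewrite IHm by (intros; apply H; lia). rewrite (H m) by lia. reflexivity.
Qed.

Lemma allz_false a m k : k < m -> a k <> 0 -> allz a m = false.
Proof.
  induction m; intros Hk Ha; [lia|]. simpl.
  destruct (Nat.eq_dec k m) as [->|Hne].
  - destruct (allz a m); simpl; auto. apply Nat.eqb_neq; auto.
  - rewrite IHm by lia. reflexivity.
Qed.

Definition fmod (g a : baire) : baire := fun m =>
  g m + (if allz a m && negb (a m =? 0) then 1 else 0).

Lemma nn_vit g a : ~ ~ vitali g (fmod g a).
Proof.
  intros Hn.
  assert (Hz : forall k, a k = 0).
  { intro k. destruct (Nat.eq_dec (a k) 0) as [E|E]; auto. exfalso. apply Hn.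
    exists k. intros m Hm. unfold fmod. rewrite (allz_false a m k Hm E). simpl. lia. }
  apply Hn. exists 0. intros m _. unfold fmod. rewrite Hz. simpl.
  destruct (allz a m); simpl; lia.
Qed.

Theorem theorem9p2 :
  BCP ->
  stable_eq baire_eq /\
  (forall g : baire, ~ (forall a : baire, ~ ~ vitali g a -> vitali g a)).
Proof.
  intros bcp. split.
  - intros x y Hnn n. destruct (Nat.eq_dec (x n) (y n)) as [E|E]; auto.
    exfalso. apply Hnn. intro H. apply E, H.
  - intros g H.
    destruct (bcp (fun a n => forall m, n < m -> g m = fmod g a m)
                (fun a => H _ (nn_vit g a)) (fun _ => 0)) as [m0 [n Hb]].
    set (K := m0 + n + 1).
    set (b := fun i => if i =? K then 1 else 0).
    assert (Hs : init_seg (fun _ => 0) m0 b).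
    { intros i Hi. unfold b. destruct (Nat.eqb_spec i K); [lia|reflexivity]. }
    specialize (Hb b Hs K ltac:(unfold K; lia)).
    unfold fmod in Hb.
    rewrite allz_true in Hb.
    + unfold b in Hb. rewrite Nat.eqb_refl in Hb. simpl in Hb. lia.
    + intros i Hi. unfold b. destruct (Nat.eqb_spec i K); [lia|reflexivity].
Qed.
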